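(* Consider the two-layer multi-item order fulfillment problem described in the context with a single FDC ($K=1$), fixed costs $f_0\ge0$, $f_1>0$, and variable costs in $[a,b]$ for constants $b>a>0$. Let \textsc{Better-of-Two} run \textsc{Cost-Comparison AdjV-Priority} whenever $f_0\le f_1$ or $1+\max\{f_0/f_1,\sqrt{b/a}\}\le(4+\sqrt2)\max\{\sqrt{f_0/(2a)},\sqrt{b/a}\}$, and otherwise run \textsc{Order-Size AdjV-Priority} with $\eta=\sqrt{\max\{f_0/2,b\}/a}$ and $\theta=f_0/(2a\eta)$. Then \[\mathfrak R(\textsc{Better-of-Two})\le\min\left\{1+\max\left\{\frac{f_0}{f_1},\sqrt{\frac ba}\right\},\ B\right\}\le\max\left\{\min\left\{2\frac{f_0}{f_1},\ (2\sqrt2+1)\sqrt{\frac{f_0}{a}}\right\},\ (4+\sqrt2)\sqrt{\frac ba}\right\},\] where $B=(4+\sqrt2)\sqrt{\max\{f_0/2,b\}/a}$ if $f_0\ge f_1$ and $B=+\infty$ if $f_0<f_1$.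
   Context: Problem with one FDC (index $1$) and one RDC (index $0$, unlimited inventory). The FDC initially holds $I_{1,0}^i\ge0$ units of item $i\in[n]$, never replenished. In periods $t=1,\dots,T$ an order $\boldsymbol S_t=(S_t^i)_i$ of nonnegative integers arrives; the policy must immediately and irrevocably choose $m_{0,t}^i,m_{1,t}^i\ge0$ with $m_{0,t}^i+m_{1,t}^i=S_t^i$ and $m_{1,t}^i\le I_{1,t-1}^i$, where $I_{1,t}^i=I_{1,0}^i-\sum_{\tau\le t}m_{1,\tau}^i$. Period cost $\sum_{k=0,1}[f_k\mathbb{I}(\sum_im_{k,t}^i>0)+\sum_ic_{k,t}^im_{k,t}^i]$; total cost is the sum. Online policies use only fixed costs, initial inventories, constants $a,b$ and orders/variable costs up to the current period. $\mathfrak R(\mathrm{ALG})$ is the supremum of (expected) policy cost over offline optimal cost, over all $n,T$, initial inventories, variable costs in $[a,b]$ and order sequences. \textsc{Cost-Comparison AdjV-Priority}: in period $t$, for each $i$, $\hat m_{1,t}^i=\min\{S_t^i,I_{1,t-1}^i\}$ if $c_{1,t}^i<\sqrt{a/b}\,c_{0,t}^i$ else $0$, $\hat m_{0,t}^i=S_t^i-\hat m_{1,t}^i$; if $\sum_{k=0,1}[f_k\mathbb{I}(\sum_i\hat m_{k,t}^i>0)+\sum_ic_{k,t}^i\hat m_{k,t}^i]>f_0+\sum_ic_{0,t}^iS_t^i$ then the whole order is fulfilled from the RDC, otherwise $m=\hat m$. \textsc{Order-Size AdjV-Priority} with parameters $\eta\ge1,\theta\ge0$: in period $t$, for each $i$,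 $\hat m_{1,t}^i=\min\{S_t^i,I_{1,t-1}^i\}$ if $c_{1,t}^i<c_{0,t}^i/\eta$ else $0$, $\hat m_{0,t}^i=S_t^i-\hat m_{1,t}^i$; if $\sum_iS_t^i\le\theta$ and $I_{1,t-1}^i\ge S_t^i$ for all $i$, the whole order is fulfilled from the FDC, otherwise $m=\hat m$. *)

(* Defs.v *)
From Stdlib Require Import Reals Lra Lia List.
Open Scope R_scope.

Fixpoint sumR (k : nat) (f : nat -> R) : R :=
  match k with O => 0 | S k' => sumR k' f + f k' end.

Fixpoint sumN (k : nat) (f : nat -> nat) : nat :=
  match k with O => O | S k' => (sumN k' f + f k')%nat end.

(* An instance: n items (indexed 0..n-1), periods 1..T.
   ord t i = S_t^i, c0 t i = c_{0,t}^i, c1 t i = c_{1,t}^i, I0 i = I_{1,0}^i.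
   A decision in period t is given by m1 : nat -> nat (item -> m_{1,t}^i);
   m_{0,t}^i = S_t^i - m_{1,t}^i. *)

Definition indic (b : bool) : R := if b then 1 else 0.

Definition anypos (n : nat) (m : nat -> nat) : bool :=
  existsb (fun i => Nat.ltb 0 (m i)) (seq 0 n).

Definition period_cost (f0 f1 : R) (n : nat) (St : nat -> nat)
  (c0t c1t : nat -> R) (m1 : nat -> nat) : R :=
  let m0 := fun i => (St i - m1 i)%nat in
  f0 * indic (anypos n m0) + f1 * indic (anypos n m1)
  + sumR n (fun i => c0t i * INR (m0 i) + c1t i * INR (m1 i)).

Definition cc_decision (f0 f1 a b : R) (n : nat) (St : nat -> nat)
  (c0t c1t : nat -> R) (I : nat -> nat) : nat -> nat :=
  let mhat := fun i => if Rlt_dec (c1t i) (sqrt (a / b) * c0t i)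
                       then Nat.min (St i) (I i) else O in
  if Rlt_dec (f0 + sumR n (fun i => c0t i * INR (St i)))
             (period_cost f0 f1 n St c0t c1t mhat)
  then (fun _ => O) else mhat.

Definition os_decision (eta theta : R) (n : nat) (St : nat -> nat)
  (c0t c1t : nat -> R) (I : nat -> nat) : nat -> nat :=
  let mhat := fun i => if Rlt_dec (c1t i) (c0t i / eta)
                       then Nat.min (St i) (I i) else O in
  if Rle_dec (INR (sumN n St)) theta then
    if forallb (fun i => Nat.leb (St i) (I i)) (seq 0 n) then St else mhat
  else mhat.

(* A (deterministic, online) decision rule: period-t data and current
   inventory -> m_{1,t}. *)
Definition rule := (nat -> nat) -> (nat -> R) -> (nat -> R) -> (nat -> nat) -> nat -> nat.

Fixpoint run (f0 f1 : R) (n : nat) (I0 : nat -> nat) (ord : nat -> nat -> nat)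
  (c0 c1 : nat -> nat -> R) (dec : rule) (k : nat) : (nat -> nat) * R :=
  match k with
  | O => (I0, 0)
  | S k' =>
      let (I, C) := run f0 f1 n I0 ord c0 c1 dec k' in
      let t := S k' in
      let m1 := dec (ord t) (c0 t) (c1 t) I in
      (fun i => (I i - m1 i)%nat, C + period_cost f0 f1 n (ord t) (c0 t) (c1 t) m1)
  end.

Definition policy_cost f0 f1 n I0 ord c0 c1 (dec : rule) (T : nat) : R :=
  snd (run f0 f1 n I0 ord c0 c1 dec T).

Definition use_cc (f0 f1 a b : R) : Prop :=
  f0 <= f1 \/
  1 + Rmax (f0 / f1) (sqrt (b / a))
    <= (4 + sqrt 2) * Rmax (sqrt (f0 / (2 * a))) (sqrt (b / a)).

Definition bot_eta (f0 a b : R) : R := sqrt (Rmax (f0 / 2) b / a).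
Definition bot_theta (f0 a b : R) : R := f0 / (2 * a * bot_eta f0 a b).

Definition better_of_two (f0 f1 a b : R) (n : nat) : rule :=
  if Rle_dec f0 f1 then cc_decision f0 f1 a b n
  else if Rle_dec (1 + Rmax (f0 / f1) (sqrt (b / a)))
                  ((4 + sqrt 2) * Rmax (sqrt (f0 / (2 * a))) (sqrt (b / a)))
  then cc_decision f0 f1 a b n
  else os_decision (bot_eta f0 a b) (bot_theta f0 a b) n.

Definition feasible (n T : nat) (I0 : nat -> nat) (ord : nat -> nat -> nat)
  (m1 : nat -> nat -> nat) : Prop :=
  forall t i, (1 <= t <= T)%nat -> (i < n)%nat ->
    (m1 t i <= ord t i)%nat /\
    (sumN t (fun s => m1 (S s) i) <= I0 i)%nat.

Definition plan_cost f0 f1 (n T : nat) (ord : nat -> nat -> nat)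
  (c0 c1 : nat -> nat -> R) (m1 : nat -> nat -> nat) : R :=
  sumR T (fun s => period_cost f0 f1 n (ord (S s)) (c0 (S s)) (c1 (S s)) (m1 (S s))).

Definition costs_in (a b : R) (n T : nat) (c : nat -> nat -> R) : Prop :=
  forall t i, (1 <= t <= T)%nat -> (i < n)%nat -> a <= c t i <= b.

(* First bound: min{1 + max{f0/f1, sqrt(b/a)}, B}, B = +oo if f0 < f1. *)
Definition bound1 (f0 f1 a b : R) : R :=
  let X := 1 + Rmax (f0 / f1) (sqrt (b / a)) in
  let B := (4 + sqrt 2) * sqrt (Rmax (f0 / 2) b / a) in
  if Rlt_dec f0 f1 then X else Rmin X B.

Definition bound2 (f0 f1 a b : R) : R :=
  Rmax (Rmin (2 * (f0 / f1)) ((2 * sqrt 2 + 1) * sqrt (f0 / a)))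
       ((4 + sqrt 2) * sqrt (b / a)).

(* Main.v *)
Require Import Defs.
From Stdlib Require Import Reals Lra Lia List Psatz Classical.
Open Scope R_scope.


Lemma sumR_ext k f g : (forall i, (i < k)%nat -> f i = g i) -> sumR k f = sumR k g.
Proof. induction k; simpl; intros H; [reflexivity|]. rewrite IHk by (intros; apply H; lia). rewrite H by lia. reflexivity. Qed.

Lemma sumR_le k f g : (forall i, (i < k)%nat -> f i <= g i) -> sumR k f <= sumR k g.
Proof. induction k; simpl; intros H; [lra|]. assert (f k <= g k) by (apply H; lia).
  assert (sumR k f <= sumR k g) by (apply IHk; intros; apply H; lia). lra. Qed.

Lemma sumR_plus k f g : sumR k (fun i => f i + g i) = sumR k f + sumR k g.
Proof. induction k; simpl; [lra|]. rewrite IHk. lra. Qed.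

Lemma sumR_scal k c f : sumR k (fun i => c * f i) = c * sumR k f.
Proof. induction k; simpl; [lra|]. rewrite IHk. lra. Qed.

Lemma sumR_nonneg k f : (forall i, (i<k)%nat -> 0 <= f i) -> 0 <= sumR k f.
Proof. induction k; simpl; intros H; [lra|]. assert (0 <= f k) by (apply H; lia).
  assert (0 <= sumR k f) by (apply IHk; intros; apply H; lia). lra. Qed.

Lemma sumR_INR k g : sumR k (fun i => INR (g i)) = INR (sumN k g).
Proof. induction k; simpl; [reflexivity|]. rewrite IHk, plus_INR. reflexivity. Qed.

Lemma sumR_swap T n F : sumR T (fun t => sumR n (fun i => F t i)) = sumR n (fun i => sumR T (fun t => F t i)).
Proof. induction T; simpl.
  - induction n; simpl; [reflexivity|]. rewrite <- IHn. lra.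
  - rewrite IHT. rewrite <- sumR_plus. reflexivity. Qed.

Lemma anypos_true n m : anypos n m = true -> exists i, (i<n)%nat /\ (0 < m i)%nat.
Proof. unfold anypos. intros H. apply existsb_exists in H. destruct H as [x [Hx Hm]].
  apply in_seq in Hx. apply Nat.ltb_lt in Hm. exists x. split; lia. Qed.

Lemma anypos_false n m : anypos n m = false -> forall i, (i<n)%nat -> m i = 0%nat.
Proof. intros H i Hi. destruct (m i) eqn:E; auto. exfalso.
  assert (anypos n m = true). { unfold anypos. apply existsb_exists. exists i. split.
  apply in_seq. lia. apply Nat.ltb_lt. lia. } congruence. Qed.

Lemma anypos_all0 n m : (forall i, (i<n)%nat -> m i = 0%nat) -> anypos n m = false.
Proof. intros H. destruct (anypos n m) eqn:E; auto. apply anypos_true in E.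
  destruct E as [i [Hi Hm]]. rewrite H in Hm; lia. Qed.

Lemma indic_bounds c : 0 <= indic c <= 1.
Proof. destruct c; simpl; lra. Qed.

Lemma period_cost_zero f0 f1 n S c0 c1 x :
  (forall i, (i<n)%nat -> S i = 0%nat) -> (forall i, (i<n)%nat -> (x i <= S i)%nat) ->
  period_cost f0 f1 n S c0 c1 x = 0.
Proof. intros HS Hx. unfold period_cost.
  rewrite (anypos_all0 n (fun i => (S i - x i)%nat)) by (intros i Hi; rewrite HS; lia).
  rewrite (anypos_all0 n x) by (intros i Hi; specialize (HS i Hi); specialize (Hx i Hi); lia).
  simpl. rewrite (sumR_ext n _ (fun _ => 0)).
  - clear. induction n; simpl; lra.
  - intros i Hi. specialize (HS i Hi); specialize (Hx i Hi).
    replace (S i - x i)%nat with 0%nat by lia. replace (x i) with 0%nat by lia. simpl. lra. Qed.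

Lemma period_cost_nonneg f0 f1 n S c0 c1 x : 0 <= f0 -> 0 <= f1 ->
  (forall i, (i<n)%nat -> 0 <= c0 i /\ 0 <= c1 i) -> 0 <= period_cost f0 f1 n S c0 c1 x.
Proof. intros H0 H1 Hc. unfold period_cost.
  pose proof (indic_bounds (anypos n (fun i => (S i - x i)%nat))).
  pose proof (indic_bounds (anypos n x)).
  assert (0 <= sumR n (fun i => c0 i * INR (S i - x i) + c1 i * INR (x i))).
  { apply sumR_nonneg. intros i Hi. destruct (Hc i Hi).
    pose proof (pos_INR (S i - x i)); pose proof (pos_INR (x i)). nra. }
  nra. Qed.

Lemma deficit (Inv u m : nat -> nat) I0 T :
  Inv 0%nat = I0 ->
  (forall s, (s < T)%nat -> (u s <= Inv s)%nat /\ Inv (S s) = (Inv s - u s)%nat) ->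
  (forall k, (k <= T)%nat -> (sumN k m <= I0)%nat) ->
  (sumN T (fun s => m s - Inv s) <= sumN T (fun s => u s - m s))%nat.
Proof.
  intros H0 Hs Hm.
  assert (forall k, (k <= T)%nat ->
    (sumN k (fun s => m s - Inv s) <= sumN k (fun s => u s - m s))%nat /\
    (sumN k (fun s => m s - Inv s) + I0 <= sumN k (fun s => u s - m s) + Inv k + sumN k m)%nat).
  { induction k; intros Hk; simpl. lia.
    destruct IHk as [IH1 IH2]; [lia|].
    destruct (Hs k) as [Hu HI]; [lia|]. pose proof (Hm (S k) Hk) as HM. simpl in HM.
    rewrite HI. lia. }
  apply H; lia.
Qed.

Definition Inv f0 f1 n I0 ord c0 c1 dec k := fst (run f0 f1 n I0 ord c0 c1 dec k).

Lemma run_S f0 f1 n I0 ord c0 c1 (dec : rule) k :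
  run f0 f1 n I0 ord c0 c1 dec (S k) =
  (fun i => (fst (run f0 f1 n I0 ord c0 c1 dec k) i -
     dec (ord (S k)) (c0 (S k)) (c1 (S k)) (fst (run f0 f1 n I0 ord c0 c1 dec k)) i)%nat,
   snd (run f0 f1 n I0 ord c0 c1 dec k) +
   period_cost f0 f1 n (ord (S k)) (c0 (S k)) (c1 (S k))
     (dec (ord (S k)) (c0 (S k)) (c1 (S k)) (fst (run f0 f1 n I0 ord c0 c1 dec k)))).
Proof. simpl. destruct (run f0 f1 n I0 ord c0 c1 dec k). reflexivity. Qed.

Lemma global f0 f1 n I0 ord c0 c1 (dec : rule) T m1 K W :
  0 <= W -> feasible n T I0 ord m1 ->
  (forall t, (1 <= t <= T)%nat -> forall I,
     (forall i, (i < n)%nat -> (dec (ord t) (c0 t) (c1 t) I i <= I i)%nat) /\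
     period_cost f0 f1 n (ord t) (c0 t) (c1 t) (dec (ord t) (c0 t) (c1 t) I)
       + W * sumR n (fun i => INR (dec (ord t) (c0 t) (c1 t) I i - m1 t i))
     <= K * period_cost f0 f1 n (ord t) (c0 t) (c1 t) (m1 t)
       + W * sumR n (fun i => INR (m1 t i - I i))) ->
  policy_cost f0 f1 n I0 ord c0 c1 dec T <= K * plan_cost f0 f1 n T ord c0 c1 m1.
Proof.
  intros HW Hf Hp. unfold policy_cost, plan_cost.
  set (IV := fun k => fst (run f0 f1 n I0 ord c0 c1 dec k)).
  set (U := fun s i => dec (ord (S s)) (c0 (S s)) (c1 (S s)) (IV s) i).
  assert (Hind : forall k, (k <= T)%nat ->
    snd (run f0 f1 n I0 ord c0 c1 dec k)
     + W * sumR n (fun i => INR (sumN k (fun s => U s i - m1 (S s) i)%nat))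
    <= K * sumR k (fun s => period_cost f0 f1 n (ord (S s)) (c0 (S s)) (c1 (S s)) (m1 (S s)))
     + W * sumR n (fun i => INR (sumN k (fun s => m1 (S s) i - IV s i)%nat))).
  { induction k; intros Hk.
    - simpl. lra.
    - rewrite run_S. simpl snd. simpl sumN. simpl sumR.
      destruct (Hp (S k) ltac:(lia) (IV k)) as [_ Hk2].
      specialize (IHk ltac:(lia)).
      assert (E1 : sumR n (fun i => INR (sumN k (fun s => U s i - m1 (S s) i)%nat + (U k i - m1 (S k) i))%nat) =
         sumR n (fun i => INR (sumN k (fun s => U s i - m1 (S s) i)%nat)) +
         sumR n (fun i => INR (dec (ord (S k)) (c0 (S k)) (c1 (S k)) (IV k) i - m1 (S k) i)%nat)).
      { rewrite <- sumR_plus. apply sumR_ext. intros i Hi. rewrite plus_INR. reflexivity. }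
      assert (E2 : sumR n (fun i => INR (sumN k (fun s => m1 (S s) i - IV s i)%nat + (m1 (S k) i - IV k i))%nat) =
         sumR n (fun i => INR (sumN k (fun s => m1 (S s) i - IV s i)%nat)) +
         sumR n (fun i => INR (m1 (S k) i - IV k i))%nat).
      { rewrite <- sumR_plus. apply sumR_ext. intros i Hi. rewrite plus_INR. reflexivity. }
      rewrite E1, E2. fold (IV k). nra. }
  specialize (Hind T (le_n T)).
  assert (Hd : sumR n (fun i => INR (sumN T (fun s => m1 (S s) i - IV s i)%nat))
            <= sumR n (fun i => INR (sumN T (fun s => U s i - m1 (S s) i)%nat))).
  { apply sumR_le. intros i Hi. apply le_INR.
    apply (deficit (fun s => IV s i) (fun s => U s i) (fun s => m1 (S s) i) (I0 i) T).
    - reflexivity.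
    - intros s Hs. split.
      + apply (Hp (S s) ltac:(lia) (IV s)). exact Hi.
      + unfold IV at 1. rewrite run_S. reflexivity.
    - intros k Hk. destruct k. simpl; lia. apply (Hf (S k) i); lia. }
  nra.
Qed.

Lemma anypos_mono n x y : anypos n x = true -> (forall i, (i<n)%nat -> (x i <= y i)%nat) -> anypos n y = true.
Proof. intros H Hxy. apply anypos_true in H. destruct H as [i [Hi Hx]].
  destruct (anypos n y) eqn:E; auto. pose proof (anypos_false n y E i Hi). specialize (Hxy i Hi). lia. Qed.

Lemma sumR_zero n f : (forall i, (i<n)%nat -> f i = 0) -> sumR n f = 0.
Proof. intros H. rewrite (sumR_ext n f (fun _ => 0)) by auto. clear. induction n; simpl; lra. Qed.

Lemma sqrt_facts a b : 0 < a -> a < b ->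
  sqrt (a/b) * sqrt (b/a) = 1 /\ sqrt (b/a) * sqrt (b/a) * a = b /\ 1 <= sqrt (b/a).
Proof. intros Ha Hab.
  assert (Hba : 0 <= b/a) by (apply Rlt_le; apply Rdiv_lt_0_compat; lra).
  assert (Hab' : 0 <= a/b) by (apply Rlt_le; apply Rdiv_lt_0_compat; lra).
  split; [| split].
  - rewrite <- sqrt_mult by auto. replace (a/b*(b/a)) with 1 by (field; lra). apply sqrt_1.
  - rewrite sqrt_sqrt by auto. field. lra.
  - rewrite <- sqrt_1. apply sqrt_le_1_alt. apply Rmult_le_reg_r with a; [lra|].
    unfold Rdiv. rewrite Rmult_assoc, Rinv_l by lra. lra.
Qed.

Lemma cc_item_cheap c0 c1 b Q rho (S I m : nat) : 0 <= Q -> 0 <= c1 -> c1 <= c0 -> c0 <= b -> b <= Q*c0 -> Q <= rho ->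
  (m <= S)%nat ->
  c0 * INR (S - Nat.min S I) + c1 * INR (Nat.min S I) + b * INR (Nat.min S I - m)
  <= (1+rho)*(c0*INR(S - m) + c1*INR m) + b*INR(m - I).
Proof. intros HQ H1 H2 H3 H4 H5 Hm.
  destruct (Compare_dec.le_lt_dec m (Nat.min S I)) as [Hle|Hlt].
  - replace (m - I)%nat with 0%nat by lia.
    rewrite !minus_INR by lia. pose proof (le_INR _ _ Hle). pose proof (le_INR _ _ (Nat.le_min_l S I)).
    pose proof (pos_INR m). set (x := INR S) in *. set (y := INR (Nat.min S I)) in *. set (z := INR m) in *.
    simpl INR.
    assert (b*(y-z) <= Q*c0*(y-z)) by (apply Rmult_le_compat_r; lra).
    assert (Q*c0*(y-z) <= rho*c0*(y-z)) by (apply Rmult_le_compat_r; [lra|]; apply Rmult_le_compat_r; lra).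
    assert (c1*(y-z) <= c0*(y-z)) by (apply Rmult_le_compat_r; lra).
    assert (0 <= rho*(c0*(x-y) + c1*z)).
    { apply Rmult_le_pos. lra. pose proof (Rmult_le_pos c0 (x-y) ltac:(lra) ltac:(lra)).
      pose proof (Rmult_le_pos c1 z ltac:(lra) ltac:(lra)). lra. }
    nra.
  - replace (Nat.min S I) with I in * by lia. replace (I - m)%nat with 0%nat by lia.
    rewrite !minus_INR by lia. pose proof (pos_INR I). pose proof (le_INR I m ltac:(lia)).
    pose proof (le_INR m S Hm). simpl INR.
    assert (0 <= rho) by lra.
    assert (c0*(INR m - INR I) <= b*(INR m - INR I)) by (apply Rmult_le_compat_r; lra).
    assert (c1*INR I <= c1 * INR m) by (apply Rmult_le_compat_l; lra).
    assert (0 <= rho*(c0*(INR S - INR m) + c1*INR m)).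
    { apply Rmult_le_pos. lra. pose proof (Rmult_le_pos c0 (INR S - INR m) ltac:(lra) ltac:(lra)).
      pose proof (Rmult_le_pos c1 (INR m) ltac:(lra) ltac:(lra)). lra. }
    nra.
Qed.

Lemma cc_item_non c0 c1 b Q rho (S I m : nat) : 0 <= Q -> 0 <= c1 -> 0 <= c0 -> c0 <= Q*c1 -> Q <= rho -> 0 <= b ->
  (m <= S)%nat ->
  c0 * INR (S - 0) + c1 * INR 0 + b * INR (0 - m)
  <= (1+rho)*(c0*INR(S - m) + c1*INR m) + b*INR(m - I).
Proof. intros HQ H1 H2 H3 H4 H5 Hm. replace (S-0)%nat with S by lia. simpl (0 - m)%nat. simpl (INR 0).
  pose proof (pos_INR (m - I)). rewrite minus_INR by lia. pose proof (le_INR m S Hm). pose proof (pos_INR m).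
  assert (c0*INR m <= Q*c1*INR m) by (apply Rmult_le_compat_r; lra).
  assert (Q*c1*INR m <= rho*c1*INR m) by (apply Rmult_le_compat_r; [lra|]; apply Rmult_le_compat_r; lra).
  assert (0 <= rho*(c0*(INR S - INR m))).
  { apply Rmult_le_pos. lra. apply Rmult_le_pos; lra. }
  assert (0 <= b * INR (m - I)) by (apply Rmult_le_pos; lra).
  nra.
Qed.

Lemma anypos_ext n x y : (forall i, (i<n)%nat -> x i = y i) -> anypos n x = anypos n y.
Proof. intros H. destruct (anypos n x) eqn:E1; destruct (anypos n y) eqn:E2; auto.
  - apply anypos_true in E1. destruct E1 as [i [Hi Hx]]. pose proof (anypos_false n y E2 i Hi). rewrite H in Hx; lia.
  - apply anypos_true in E2. destruct E2 as [i [Hi Hx]]. pose proof (anypos_false n x E1 i Hi). rewrite <- H in Hx; lia.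
Qed.

Lemma cc_period f0 f1 a b n S c0 c1 I m :
  0 <= f0 -> 0 < f1 -> 0 < a -> a < b ->
  (forall i, (i<n)%nat -> (a <= c0 i <= b) /\ (a <= c1 i <= b)) ->
  (forall i, (i<n)%nat -> (m i <= S i)%nat) ->
  (forall i, (i<n)%nat -> (cc_decision f0 f1 a b n S c0 c1 I i <= I i)%nat) /\
  period_cost f0 f1 n S c0 c1 (cc_decision f0 f1 a b n S c0 c1 I)
   + b * sumR n (fun i => INR (cc_decision f0 f1 a b n S c0 c1 I i - m i)%nat)
  <= (1 + Rmax (f0/f1) (sqrt (b/a))) * period_cost f0 f1 n S c0 c1 m
   + b * sumR n (fun i => INR (m i - I i)%nat).
Proof.
  intros Hf0 Hf1 Ha Hab Hc Hm.
  destruct (sqrt_facts a b Ha Hab) as [HqQ [HQQ HQ1]].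
  set (rho := Rmax (f0/f1) (sqrt (b/a))).
  set (Q := sqrt (b/a)) in *. set (q := sqrt (a/b)) in *.
  assert (Hr1 : Q <= rho) by apply Rmax_r.
  assert (Hr2 : f0 <= rho * f1).
  { assert (f0/f1 <= rho) by apply Rmax_l. apply Rmult_le_reg_r with (/f1).
    apply Rinv_0_lt_compat; lra. rewrite Rmult_assoc, Rinv_r by lra. unfold Rdiv in H. lra. }
  assert (Hch : forall i, (i<n)%nat -> c1 i < q * c0 i -> c1 i <= c0 i /\ b <= Q * c0 i).
  { intros i Hi H. destruct (Hc i Hi) as [[? ?] [? ?]].
    assert (Q * c1 i < Q * (q * c0 i)) by (apply Rmult_lt_compat_l; lra).
    replace (Q * (q * c0 i)) with ((q*Q) * c0 i) in H4 by ring. rewrite HqQ in H4.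
    split. nra. 
    assert (Q*(Q*a) <= Q * c0 i). { apply Rmult_le_compat_l. lra. nra. } nra. }
  assert (Hnch : forall i, (i<n)%nat -> q * c0 i <= c1 i -> c0 i <= Q * c1 i).
  { intros i Hi H. destruct (Hc i Hi) as [[? ?] [? ?]].
    assert (Q * (q * c0 i) <= Q * c1 i) by (apply Rmult_le_compat_l; lra).
    replace (Q * (q * c0 i)) with ((q*Q) * c0 i) in H4 by ring. rewrite HqQ in H4. lra. }
  assert (Hdef : 0 <= b * sumR n (fun i => INR (m i - I i)%nat)).
  { apply Rmult_le_pos. lra. apply sumR_nonneg. intros; apply pos_INR. }
  assert (Hcpos : forall i, (i<n)%nat -> 0 <= c0 i /\ 0 <= c1 i).
  { intros i Hi; destruct (Hc i Hi); lra. }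
  assert (Hopt : 0 <= period_cost f0 f1 n S c0 c1 m) by (apply period_cost_nonneg; lra || auto).
  assert (Hrho0 : 0 <= rho) by lra.
  unfold cc_decision. cbv zeta. fold q.
  set (mh := fun i => if Rlt_dec (c1 i) (q * c0 i) then Nat.min (S i) (I i) else 0%nat).
  assert (Hmh : forall i, (i<n)%nat -> (c1 i < q * c0 i /\ mh i = Nat.min (S i) (I i)) \/
                                       (q * c0 i <= c1 i /\ mh i = 0%nat)).
  { intros i Hi. unfold mh. destruct (Rlt_dec (c1 i) (q * c0 i)); [left|right]; split; auto; lra. }
  assert (Hmain : anypos n m = true ->
    period_cost f0 f1 n S c0 c1 mh + b * sumR n (fun i => INR (mh i - m i)%nat)
    <= (1 + rho) * period_cost f0 f1 n S c0 c1 m + b * sumR n (fun i => INR (m i - I i)%nat)).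
  { intros Em.
    assert (Hv : sumR n (fun i => (c0 i * INR (S i - mh i) + c1 i * INR (mh i)) + b * INR (mh i - m i)%nat)
       <= sumR n (fun i => (1+rho)*(c0 i*INR(S i - m i) + c1 i*INR(m i)) + b*INR(m i - I i)%nat)).
    { apply sumR_le. intros i Hi. destruct (Hc i Hi) as [[Ha0 Hb0] [Ha1 Hb1]].
      destruct (Hmh i Hi) as [[H1 H2]|[H1 H2]]; rewrite H2.
      - destruct (Hch i Hi H1). apply cc_item_cheap with Q; auto; lra.
      - apply cc_item_non with Q; [lra|lra|lra|apply Hnch; auto|lra|lra|auto]. }
    rewrite !sumR_plus, !sumR_scal in Hv.
    unfold period_cost. cbv zeta. rewrite Em. simpl (indic true).
    pose proof (indic_bounds (anypos n (fun i => (S i - mh i)%nat))).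
    pose proof (indic_bounds (anypos n mh)).
    assert (Hfx : f0 * indic (anypos n (fun i => (S i - mh i)%nat)) + f1 * indic (anypos n mh)
                  <= (1+rho) * (f0 * indic (anypos n (fun i => (S i - m i)%nat)) + f1 * 1)).
    { destruct (anypos n (fun i => (S i - m i)%nat)); simpl indic; nra. }
    rewrite (sumR_plus n (fun i => c0 i * INR (S i - mh i)) (fun i => c1 i * INR (mh i))). lra. }
  destruct (Rlt_dec (f0 + sumR n (fun i => c0 i * INR (S i))) (period_cost f0 f1 n S c0 c1 mh)) as [Hlt|Hge].
  - split. intros; lia.
    rewrite (sumR_zero n (fun i => INR (0 - m i)%nat)) by (intros; reflexivity).
    destruct (anypos n m) eqn:Em.
    + assert (Hle : period_cost f0 f1 n S c0 c1 (fun _ => 0%nat) <= f0 + sumR n (fun i => c0 i * INR (S i))).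
      { unfold period_cost. cbv zeta. rewrite (anypos_all0 n (fun _ => 0%nat)) by auto.
        pose proof (indic_bounds (anypos n (fun i => (S i - 0)%nat))).
        rewrite (sumR_ext n _ (fun i => c0 i * INR (S i))).
        simpl indic. nra. intros i Hi. replace (S i - 0)%nat with (S i) by lia. simpl. ring. }
      assert (0 <= b * sumR n (fun i => INR (mh i - m i)%nat)).
      { apply Rmult_le_pos. lra. apply sumR_nonneg. intros; apply pos_INR. }
      specialize (Hmain eq_refl). lra.
    + assert (E : period_cost f0 f1 n S c0 c1 (fun _ => 0%nat) = period_cost f0 f1 n S c0 c1 m).
      { pose proof (anypos_false n m Em) as Hm0. unfold period_cost. cbv zeta.
        rewrite Em, (anypos_all0 n (fun _ => 0%nat)) by auto.
        rewrite (anypos_ext n (fun i => (S i - 0)%nat) (fun i => (S i - m i)%nat)).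
        rewrite (sumR_ext n (fun i => c0 i * INR (S i - 0) + c1 i * INR 0)
                           (fun i => c0 i * INR (S i - m i) + c1 i * INR (m i))). reflexivity.
        intros i Hi. rewrite Hm0 by auto. reflexivity.
        intros i Hi. rewrite Hm0 by auto. reflexivity. }
      rewrite E. nra.
  - apply Rnot_lt_le in Hge. split.
    { intros i Hi; destruct (Hmh i Hi) as [[_ E]|[_ E]]; rewrite E; lia. }
    destruct (anypos n m) eqn:Em. { exact (Hmain eq_refl). }
    pose proof (anypos_false n m Em) as Hm0.
    assert (HmhS : forall i, (i<n)%nat -> (mh i <= S i)%nat).
    { intros i Hi; destruct (Hmh i Hi) as [[_ E]|[_ E]]; rewrite E; lia. }
    destruct (anypos n S) eqn:ES.
    + assert (HO : period_cost f0 f1 n S c0 c1 m = f0 + sumR n (fun i => c0 i * INR (S i))).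
      { unfold period_cost. cbv zeta.
        rewrite (anypos_mono n S (fun i => (S i - m i)%nat)) by (auto; intros i Hi; rewrite Hm0; lia).
        rewrite Em. rewrite (sumR_ext n _ (fun i => c0 i * INR (S i))). simpl indic. ring.
        intros i Hi. rewrite Hm0 by auto. replace (S i - 0)%nat with (S i) by lia. simpl. ring. }
      assert (Hs : b * sumR n (fun i => INR (mh i - m i)%nat) <= rho * sumR n (fun i => c0 i * INR (S i))).
      { rewrite <- !sumR_scal. apply sumR_le. intros i Hi. rewrite Hm0 by auto.
        replace (mh i - 0)%nat with (mh i) by lia. destruct (Hc i Hi) as [[Ha0 Hb0] [Ha1 Hb1]].
        pose proof (le_INR _ _ (HmhS i Hi)). pose proof (pos_INR (mh i)).
        destruct (Hmh i Hi) as [[H1 H2]|[H1 H2]].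
        - destruct (Hch i Hi H1) as [_ Hb].
          assert (b * INR (mh i) <= Q * c0 i * INR (mh i)) by (apply Rmult_le_compat_r; lra).
          assert (Q * c0 i * INR (mh i) <= rho * c0 i * INR (S i)).
          { apply Rmult_le_compat. nra. lra. apply Rmult_le_compat_r; lra. lra. }
          lra.
        - rewrite H2. simpl. assert (0 <= rho * (c0 i * INR (S i))). apply Rmult_le_pos. lra.
          apply Rmult_le_pos; lra. lra. }
      assert (0 <= sumR n (fun i => c0 i * INR (S i))).
      { apply sumR_nonneg. intros i Hi. destruct (Hc i Hi). pose proof (pos_INR (S i)). nra. }
      rewrite HO. assert (0 <= rho * f0) by nra. nra.
    + pose proof (anypos_false n S ES) as HS0.
      rewrite (period_cost_zero f0 f1 n S c0 c1 mh) by auto.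
      rewrite (period_cost_zero f0 f1 n S c0 c1 m) by auto.
      rewrite (sumR_zero n (fun i => INR (mh i - m i)%nat)).
      lra. intros i Hi. specialize (HmhS i Hi). rewrite HS0 in HmhS by auto.
      replace (mh i - m i)%nat with 0%nat by lia. reflexivity.
Qed.

Lemma sumR_ge_term n f i : (i<n)%nat -> (forall j, (j<n)%nat -> 0 <= f j) -> f i <= sumR n f.
Proof. induction n; intros Hi H; simpl. lia.
  assert (0 <= sumR n f) by (apply sumR_nonneg; intros; apply H; lia).
  destruct (Nat.eq_dec i n). subst. lra.
  assert (f i <= sumR n f) by (apply IHn; [lia| intros; apply H; lia]).
  assert (0 <= f n) by (apply H; lia). lra. Qed.

Lemma eta_facts f0 a b : 0 <= f0 -> 0 < a -> a < b ->
  let eta := bot_eta f0 a b in let theta := bot_theta f0 a b in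
  1 <= eta /\ b <= eta*eta*a /\ f0 <= 2*(eta*eta*a) /\ 0 <= theta /\
  b*theta <= eta*f0/2 /\ theta <= eta /\ theta * (2*a*eta) = f0.
Proof. intros Hf0 Ha Hab eta theta.
  assert (HM : 0 < Rmax (f0/2) b) by (eapply Rlt_le_trans; [|apply Rmax_r]; lra).
  assert (He2 : eta*eta*a = Rmax (f0/2) b).
  { unfold eta, bot_eta. rewrite sqrt_sqrt. field. lra. apply Rlt_le, Rdiv_lt_0_compat; lra. }
  assert (Hb : b <= eta*eta*a) by (rewrite He2; apply Rmax_r).
  assert (Hf : f0/2 <= eta*eta*a) by (rewrite He2; apply Rmax_l).
  assert (He0 : 0 <= eta) by apply sqrt_pos.
  assert (He1' : 1 < eta*eta) by (apply Rmult_lt_reg_r with a; lra).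
  assert (He1 : 1 <= eta) by nra.
  assert (Ht : theta * (2*a*eta) = f0) by (unfold theta, bot_theta; fold eta; field; lra).
  assert (Hp : 0 < 2*a*eta) by nra.
  assert (Ht0 : 0 <= theta).
  { unfold theta, bot_theta. fold eta. apply Rmult_le_pos. lra. apply Rlt_le, Rinv_0_lt_compat. lra. }
  repeat split; try lra.
  - apply Rmult_le_reg_r with (2*a*eta). lra.
    replace (b*theta*(2*a*eta)) with (b*(theta*(2*a*eta))) by ring. rewrite Ht.
    replace (eta*f0/2*(2*a*eta)) with (f0*(eta*eta*a)) by field. nra.
  - apply Rmult_le_reg_r with (2*a*eta). lra. rewrite Ht. nra.
Qed.

Lemma period_cost_ext f0 f1 n S c0 c1 x y : (forall i, (i<n)%nat -> x i = y i) ->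
  period_cost f0 f1 n S c0 c1 x = period_cost f0 f1 n S c0 c1 y.
Proof. intros H. unfold period_cost. cbv zeta.
  rewrite (anypos_ext n (fun i => (S i - x i)%nat) (fun i => (S i - y i)%nat)) by (intros i Hi; rewrite H; auto).
  rewrite (anypos_ext n x y) by auto.
  rewrite (sumR_ext n (fun i => c0 i * INR (S i - x i) + c1 i * INR (x i))
                      (fun i => c0 i * INR (S i - y i) + c1 i * INR (y i))) by (intros i Hi; rewrite H; auto).
  reflexivity. Qed.

Lemma os_period f0 f1 a b n S c0 c1 I m :
  0 <= f0 -> 0 < f1 -> f1 < f0 -> 0 < a -> a < b ->
  (forall i, (i<n)%nat -> (a <= c0 i <= b) /\ (a <= c1 i <= b)) ->
  (forall i, (i<n)%nat -> (m i <= S i)%nat) ->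
  (forall i, (i<n)%nat -> (os_decision (bot_eta f0 a b) (bot_theta f0 a b) n S c0 c1 I i <= I i)%nat) /\
  period_cost f0 f1 n S c0 c1 (os_decision (bot_eta f0 a b) (bot_theta f0 a b) n S c0 c1 I)
   + (f0 + b) * sumR n (fun i => INR (os_decision (bot_eta f0 a b) (bot_theta f0 a b) n S c0 c1 I i - m i)%nat)
  <= (4 * bot_eta f0 a b) * period_cost f0 f1 n S c0 c1 m
   + (f0 + b) * sumR n (fun i => INR (m i - I i)%nat).
Proof.
  intros Hf0 Hf1 Hf10 Ha Hab Hc Hm.
  destruct (eta_facts f0 a b Hf0 Ha Hab) as [He1 [Heb [Hef [Ht0 [HbT [HtE Ht]]]]]].
  set (eta := bot_eta f0 a b) in *. set (theta := bot_theta f0 a b) in *.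
  set (W := f0 + b).
  assert (Hdef0 : 0 <= sumR n (fun i => INR (m i - I i)%nat)) by (apply sumR_nonneg; intros; apply pos_INR).
  assert (Hcpos : forall i, (i<n)%nat -> 0 <= c0 i /\ 0 <= c1 i).
  { intros i Hi; destruct (Hc i Hi); lra. }
  assert (Hopt : 0 <= period_cost f0 f1 n S c0 c1 m) by (apply period_cost_nonneg; lra || auto).
  assert (Hch : forall i, (i<n)%nat -> c1 i < c0 i / eta -> c1 i <= c0 i /\ W <= (3*eta) * c0 i /\ c0 i <= W).
  { intros i Hi H. destruct (Hc i Hi) as [[? ?] [? ?]].
    apply (Rmult_lt_compat_r eta) in H; [|lra].
    replace (c0 i / eta * eta) with (c0 i) in H by (field; lra).
    assert (eta * a <= eta * c1 i) by (apply Rmult_le_compat_l; lra).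
    assert (eta*(eta*a) <= eta * c0 i) by (apply Rmult_le_compat_l; lra).
    unfold W. split; [nra|split; lra]. }
  assert (Hnch : forall i, (i<n)%nat -> c0 i / eta <= c1 i -> c0 i <= eta * c1 i).
  { intros i Hi H. apply (Rmult_le_compat_r eta) in H; [|lra].
    replace (c0 i / eta * eta) with (c0 i) in H by (field; lra). lra. }
  unfold os_decision. cbv zeta.
  set (mh := fun i => if Rlt_dec (c1 i) (c0 i / eta) then Nat.min (S i) (I i) else 0%nat).
  assert (Hmh : forall i, (i<n)%nat -> (c1 i < c0 i / eta /\ mh i = Nat.min (S i) (I i)) \/
                                       (c0 i / eta <= c1 i /\ mh i = 0%nat)).
  { intros i Hi. unfold mh. destruct (Rlt_dec (c1 i) (c0 i / eta)); [left|right]; split; auto; lra. }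
  assert (HmhS : forall i, (i<n)%nat -> (mh i <= S i)%nat /\ (mh i <= I i)%nat).
  { intros i Hi; destruct (Hmh i Hi) as [[_ E]|[_ E]]; rewrite E; lia. }
  assert (HA : period_cost f0 f1 n S c0 c1 S = f1 * indic (anypos n S) + sumR n (fun i => c1 i * INR (S i))).
  { unfold period_cost. cbv zeta. rewrite (anypos_all0 n (fun i => (S i - S i)%nat)) by (intros; lia).
    rewrite (sumR_ext n _ (fun i => c1 i * INR (S i))). simpl indic. ring.
    intros i Hi. replace (S i - S i)%nat with 0%nat by lia. simpl. ring. }
  assert (HB : (~ INR (sumN n S) <= theta \/ exists i, (i<n)%nat /\ (I i < S i)%nat) ->
    period_cost f0 f1 n S c0 c1 mh + W * sumR n (fun i => INR (mh i - m i)%nat)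
    <= 4 * eta * period_cost f0 f1 n S c0 c1 m + W * sumR n (fun i => INR (m i - I i)%nat)).
  { intros Hcase.
    assert (HW0 : 0 <= W) by (unfold W; lra).
    destruct (anypos n (fun i => (S i - m i)%nat)) eqn:Ed.
    - assert (Hv : sumR n (fun i => (c0 i * INR (S i - mh i) + c1 i * INR (mh i)) + W * INR (mh i - m i)%nat)
         <= sumR n (fun i => (1+(4*eta-1))*(c0 i*INR(S i - m i) + c1 i*INR(m i)) + W*INR(m i - I i)%nat)).
      { apply sumR_le. intros i Hi. destruct (Hc i Hi) as [[Ha0 Hb0] [Ha1 Hb1]].
        destruct (Hmh i Hi) as [[H1 H2]|[H1 H2]]; rewrite H2.
        - destruct (Hch i Hi H1) as [? [? ?]]. apply cc_item_cheap with (3*eta); auto; lra.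
        - apply cc_item_non with eta; [lra|lra|lra|apply Hnch; auto|lra|lra|auto]. }
      replace (1 + (4*eta-1)) with (4*eta) in Hv by ring.
      rewrite !sumR_plus, !sumR_scal in Hv.
      unfold period_cost. cbv zeta. rewrite Ed. simpl (indic true).
      pose proof (indic_bounds (anypos n (fun i => (S i - mh i)%nat))).
      pose proof (indic_bounds (anypos n mh)).
      pose proof (indic_bounds (anypos n m)).
      assert (Hfx : f0 * indic (anypos n (fun i => (S i - mh i)%nat)) + f1 * indic (anypos n mh)
                    <= 4*eta * (f0 * 1 + f1 * indic (anypos n m))).
      { assert (f0 <= eta * f0) by nra. assert (0 <= eta * (f1 * indic (anypos n m))).
        { apply Rmult_le_pos. lra. nra. } nra. }
      rewrite (sumR_plus n (fun i => c0 i * INR (S i - mh i)) (fun i => c1 i * INR (mh i))). lra.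
    - assert (Hms : forall i, (i<n)%nat -> S i = m i).
      { intros i Hi. pose proof (anypos_false _ _ Ed i Hi). specialize (Hm i Hi). simpl in H. lia. }
      rewrite <- (period_cost_ext f0 f1 n S c0 c1 S m Hms).
      rewrite (sumR_zero n (fun i => INR (mh i - m i)%nat))
        by (intros i Hi; rewrite <- Hms by auto; destruct (HmhS i Hi); replace (mh i - S i)%nat with 0%nat by lia; reflexivity).
      destruct (anypos n S) eqn:ES.
      + rewrite HA; try rewrite ES; simpl (indic true).
        set (X := sumR n (fun i => c1 i * INR (S i))).
        assert (HX0 : 0 <= X).
        { apply sumR_nonneg. intros i Hi. destruct (Hcpos i Hi). pose proof (pos_INR (S i)). nra. }
        assert (Hvar : sumR n (fun i => c0 i * INR (S i - mh i) + c1 i * INR (mh i))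
                       <= eta * X + b * sumR n (fun i => INR (m i - I i)%nat)).
        { unfold X. rewrite <- !sumR_scal, <- sumR_plus. apply sumR_le. intros i Hi.
          rewrite <- Hms by auto. destruct (Hc i Hi) as [[Ha0 Hb0] [Ha1 Hb1]].
          pose proof (pos_INR (S i)).
          assert (0 <= c1 i * INR (S i)) by (apply Rmult_le_pos; lra).
          assert (c1 i * INR (S i) <= eta * (c1 i * INR (S i))) by nra.
          destruct (Hmh i Hi) as [[G1 G2]|[G1 G2]]; rewrite G2.
          - destruct (Compare_dec.le_lt_dec (S i) (I i)).
            + replace (Nat.min (S i) (I i)) with (S i) by lia.
              replace (S i - S i)%nat with 0%nat by lia. replace (S i - I i)%nat with 0%nat by lia.
              simpl. lra.
            + replace (Nat.min (S i) (I i)) with (I i) by lia.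
              rewrite minus_INR by lia. pose proof (le_INR (I i) (S i) ltac:(lia)).
              pose proof (pos_INR (I i)).
              assert (c0 i * (INR (S i) - INR (I i)) <= b * (INR (S i) - INR (I i))) by (apply Rmult_le_compat_r; lra).
              assert (c1 i * INR (I i) <= c1 i * INR (S i)) by (apply Rmult_le_compat_l; lra).
              lra.
          - replace (S i - 0)%nat with (S i) by lia. simpl INR.
            assert (c0 i * INR (S i) <= eta * c1 i * INR (S i)).
            { apply Rmult_le_compat_r. lra. apply Hnch; auto. }
            pose proof (pos_INR (S i - I i)). assert (0 <= b * INR (S i - I i)) by (apply Rmult_le_pos; lra).
            nra. }
        assert (Hf0' : f0 <= 2*eta*X + f0 * sumR n (fun i => INR (m i - I i)%nat)).
        { destruct Hcase as [Hs | [i [Hi HIS]]].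
          - apply Rnot_le_lt in Hs.
            assert (a * INR (sumN n S) <= X).
            { unfold X. rewrite <- sumR_INR, <- sumR_scal. apply sumR_le. intros i Hi.
              destruct (Hc i Hi). apply Rmult_le_compat_r. apply pos_INR. lra. }
            assert (theta * (2*a*eta) <= INR (sumN n S) * (2*a*eta)) by (apply Rmult_le_compat_r; nra).
            assert (0 <= f0 * sumR n (fun i => INR (m i - I i)%nat)) by nra.
            nra.
          - assert (1 <= INR (m i - I i)%nat).
            { rewrite <- Hms by auto. change 1 with (INR 1). apply le_INR. lia. }
            assert (INR (m i - I i)%nat <= sumR n (fun i => INR (m i - I i)%nat)).
            { apply (sumR_ge_term n (fun i => INR (m i - I i)%nat)); auto. intros; apply pos_INR. }
            nra. }
        unfold period_cost at 1. cbv zeta.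
        pose proof (indic_bounds (anypos n (fun i => (S i - mh i)%nat))).
        pose proof (indic_bounds (anypos n mh)).
        assert (f1 <= eta * f1) by nra. assert (0 <= eta * X) by nra.
        unfold W. nra.
      + pose proof (anypos_false n S ES) as HS0.
        rewrite (period_cost_zero f0 f1 n S c0 c1 mh) by (auto; intros i Hi; apply HmhS; auto).
        rewrite (period_cost_zero f0 f1 n S c0 c1 S) by auto.
        assert (0 <= W * sumR n (fun i => INR (m i - I i)%nat)) by nra. lra. }
  destruct (Rle_dec (INR (sumN n S)) theta) as [Hs|Hs].
  2:{ split. intros i Hi; apply HmhS; auto. apply HB. left; auto. }
  destruct (forallb (fun i => Nat.leb (S i) (I i)) (seq 0 n)) eqn:Ef.
  2:{ split. intros i Hi; apply HmhS; auto. apply HB. right.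
      apply NNPP; intro Hn. assert (forallb (fun i => Nat.leb (S i) (I i)) (seq 0 n) = true).
      { apply forallb_forall. intros x Hx. apply in_seq in Hx. apply Nat.leb_le.
        destruct (Compare_dec.le_lt_dec (S x) (I x)); auto. exfalso; apply Hn; exists x; split; lia. }
      congruence. }
  assert (HSI : forall i, (i<n)%nat -> (S i <= I i)%nat).
  { intros i Hi. rewrite forallb_forall in Ef. apply Nat.leb_le. apply Ef. apply in_seq. lia. }
  split. exact HSI.
  assert (HC1 : sumR n (fun i => c1 i * INR (S i)) <= b * INR (sumN n S)).
  { rewrite <- sumR_INR, <- sumR_scal. apply sumR_le. intros i Hi. destruct (Hc i Hi).
    apply Rmult_le_compat_r. apply pos_INR. lra. }
  pose proof (indic_bounds (anypos n S)).
  destruct (anypos n (fun i => (S i - m i)%nat)) eqn:Ed.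
  - assert (HOf0 : f0 <= period_cost f0 f1 n S c0 c1 m).
    { unfold period_cost. cbv zeta. rewrite Ed. simpl indic.
      pose proof (indic_bounds (anypos n m)).
      assert (0 <= sumR n (fun i => c0 i * INR (S i - m i) + c1 i * INR (m i))).
      { apply sumR_nonneg. intros i Hi. destruct (Hcpos i Hi).
        pose proof (pos_INR (S i - m i)); pose proof (pos_INR (m i)). nra. }
      nra. }
    assert (Hsur : sumR n (fun i => INR (S i - m i)%nat) <= INR (sumN n S)).
    { rewrite <- sumR_INR. apply sumR_le. intros; apply le_INR; lia. }
    rewrite HA.
    assert (W * sumR n (fun i => INR (S i - m i)%nat) <= W * theta).
    { apply Rmult_le_compat_l. unfold W; lra. lra. }
    assert (b * INR (sumN n S) <= b * theta) by (apply Rmult_le_compat_l; lra).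
    assert (f0 * theta <= f0 * eta) by (apply Rmult_le_compat_l; lra).
    assert (f0 <= eta * f0) by nra.
    assert (4*eta*f0 <= 4*eta*period_cost f0 f1 n S c0 c1 m) by (apply Rmult_le_compat_l; lra).
    assert (0 <= W * sumR n (fun i => INR (m i - I i)%nat)) by (apply Rmult_le_pos; unfold W; lra).
    unfold W in *. nra.
  - assert (Hms : forall i, (i<n)%nat -> S i = m i).
    { intros i Hi. pose proof (anypos_false _ _ Ed i Hi). specialize (Hm i Hi). simpl in H0. lia. }
    rewrite (period_cost_ext f0 f1 n S c0 c1 S m Hms).
    rewrite (sumR_zero n (fun i => INR (S i - m i)%nat)) by (intros i Hi; rewrite Hms by auto; replace (m i - m i)%nat with 0%nat by lia; reflexivity).
    assert (0 <= W * sumR n (fun i => INR (m i - I i)%nat)) by (apply Rmult_le_pos; unfold W; lra).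
    assert (period_cost f0 f1 n S c0 c1 m <= 4*eta*period_cost f0 f1 n S c0 c1 m) by nra.
    lra.
Qed.

Lemma div_ge1 x y : 0 < y -> y <= x -> 1 <= x / y.
Proof. intros Hy H. apply Rmult_le_reg_r with y; auto. unfold Rdiv. rewrite Rmult_assoc, Rinv_l; lra. Qed.
Lemma div_lt1 x y : 0 < y -> x < y -> x / y < 1.
Proof. intros Hy H. apply Rmult_lt_reg_r with y; auto. unfold Rdiv. rewrite Rmult_assoc, Rinv_l; lra. Qed.
Lemma div_le_mono x y z : 0 < z -> x <= y -> x / z <= y / z.
Proof. intros Hz H. unfold Rdiv. apply Rmult_le_compat_r; auto. apply Rlt_le, Rinv_0_lt_compat; auto. Qed.

Lemma Q_ge1 a b : 0 < a -> a < b -> 1 <= sqrt (b/a).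
Proof. intros. destruct (sqrt_facts a b); tauto. Qed.

Lemma rmax_sqrt_le f0 a b : 0 < a ->
  Rmax (sqrt (f0 / (2 * a))) (sqrt (b / a)) <= sqrt (Rmax (f0/2) b / a).
Proof. intros Ha. apply Rmax_lub; apply sqrt_le_1_alt.
  - replace (f0/(2*a)) with ((f0/2)/a) by (field; lra). apply div_le_mono; auto. apply Rmax_l.
  - apply div_le_mono; auto. apply Rmax_r. Qed.

Lemma rmax_sqrt_ge f0 a b : 0 < a ->
  sqrt (Rmax (f0/2) b / a) <= Rmax (sqrt (f0 / (2 * a))) (sqrt (b / a)).
Proof. intros Ha. unfold Rmax at 1. destruct (Rle_dec (f0/2) b).
  - apply Rmax_r.
  - replace (f0/2/a) with (f0/(2*a)) by (field; lra). apply Rmax_l. Qed.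

Lemma bound_ineq f0 f1 a b : 0 <= f0 -> 0 < f1 -> 0 < a -> a < b ->
  bound1 f0 f1 a b <= bound2 f0 f1 a b.
Proof. intros Hf0 Hf1 Ha Hab. pose proof (Q_ge1 a b Ha Hab) as HQ.
  set (Q := sqrt (b/a)) in *.
  assert (Hs2 : sqrt 2 * sqrt 2 = 2) by (apply sqrt_sqrt; lra).
  assert (Hs0 : 0 <= sqrt 2) by apply sqrt_pos.
  unfold bound1, bound2. fold Q. destruct (Rlt_dec f0 f1) as [Hlt|Hge].
  - pose proof (div_lt1 f0 f1 Hf1 Hlt).
    rewrite Rmax_right with (x := f0/f1) by lra.
    eapply Rle_trans; [|apply Rmax_r]. nra.
  - apply Rnot_lt_le in Hge. pose proof (div_ge1 f0 f1 Hf1 Hge).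
    unfold Rmax at 2. destruct (Rle_dec (f0/2) b).
    + eapply Rle_trans; [apply Rmin_r|]. fold Q. apply Rmax_r.
    + set (y := sqrt (f0/2/a)).
      assert (Hy : sqrt (f0/a) = y * sqrt 2).
      { unfold y. rewrite <- sqrt_mult. f_equal. field. lra. apply Rlt_le, Rdiv_lt_0_compat; lra. lra. }
      assert (HB : (4 + sqrt 2) * y = (2 * sqrt 2 + 1) * sqrt (f0/a)).
      { rewrite Hy. transitivity (2*(sqrt 2 * sqrt 2)*y + sqrt 2 * y); [|ring]. rewrite Hs2. ring. }
      rewrite HB.
      unfold Rmax at 1. destruct (Rle_dec (f0/f1) Q).
      * eapply Rle_trans; [apply Rmin_l|]. eapply Rle_trans; [|apply Rmax_r]. nra.
      * eapply Rle_trans; [|apply Rmax_l]. apply Rmin_glb.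
        -- eapply Rle_trans; [apply Rmin_l|]. lra.
        -- apply Rmin_r.
Qed.

Theorem corollary1 (f0 f1 a b : R) (hf0 : 0 <= f0) (hf1 : 0 < f1)
  (ha : 0 < a) (hab : a < b) :
  (forall (n T : nat) (I0 : nat -> nat) (ord : nat -> nat -> nat)
          (c0 c1 : nat -> nat -> R),
     costs_in a b n T c0 -> costs_in a b n T c1 ->
     forall m1 : nat -> nat -> nat, feasible n T I0 ord m1 ->
       policy_cost f0 f1 n I0 ord c0 c1 (better_of_two f0 f1 a b n) T
         <= bound1 f0 f1 a b * plan_cost f0 f1 n T ord c0 c1 m1)
  /\ bound1 f0 f1 a b <= bound2 f0 f1 a b.
Proof.
  split; [|apply bound_ineq; auto].
  intros n T I0 ord c0 c1 Hc0 Hc1 m1 Hf.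
  assert (Hc : forall t, (1 <= t <= T)%nat -> forall i, (i<n)%nat ->
             (a <= c0 t i <= b) /\ (a <= c1 t i <= b)).
  { intros t Ht i Hi. split; [apply Hc0|apply Hc1]; auto. }
  assert (Hmt : forall t, (1 <= t <= T)%nat -> forall i, (i<n)%nat -> (m1 t i <= ord t i)%nat).
  { intros t Ht i Hi. apply (Hf t i Ht Hi). }
  assert (Hplan : 0 <= plan_cost f0 f1 n T ord c0 c1 m1).
  { unfold plan_cost. apply sumR_nonneg. intros s Hs. apply period_cost_nonneg; try lra.
    intros i Hi. destruct (Hc (S s) ltac:(lia) i Hi). lra. }
  pose proof (Q_ge1 a b ha hab) as HQ.
  assert (Hs0 : 0 <= sqrt 2) by apply sqrt_pos.
  set (X := 1 + Rmax (f0 / f1) (sqrt (b / a))).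
  set (eta := bot_eta f0 a b).
  assert (Heta : sqrt (b/a) <= eta).
  { apply sqrt_le_1_alt. apply div_le_mono; auto. apply Rmax_r. }
  assert (Hcc : policy_cost f0 f1 n I0 ord c0 c1 (cc_decision f0 f1 a b n) T
                <= X * plan_cost f0 f1 n T ord c0 c1 m1).
  { apply global with (W := b); [lra|exact Hf|]. intros t Ht I.
    apply cc_period; auto. }
  unfold better_of_two. destruct (Rle_dec f0 f1) as [H01|H01].
  - eapply Rle_trans; [exact Hcc|]. apply Rmult_le_compat_r; auto.
    unfold bound1. fold X. destruct (Rlt_dec f0 f1). lra.
    assert (f0 = f1) by lra. subst f1.
    apply Rmin_glb. lra.
    assert (f0 / f0 = 1) by (field; lra).
    unfold X. rewrite Rmax_right by lra. unfold bound1.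
    assert (0 <= sqrt 2 * eta) by (apply Rmult_le_pos; auto; apply sqrt_pos).
    change (sqrt (Rmax (f0 / 2) b / a)) with eta. nra.
  - destruct (Rle_dec (1 + Rmax (f0 / f1) (sqrt (b / a)))
                  ((4 + sqrt 2) * Rmax (sqrt (f0 / (2 * a))) (sqrt (b / a)))) as [Hle|Hnle].
    + eapply Rle_trans; [exact Hcc|]. apply Rmult_le_compat_r; auto.
      unfold bound1. fold X. destruct (Rlt_dec f0 f1). lra.
      apply Rmin_glb. lra. fold X in Hle.
      eapply Rle_trans; [exact Hle|]. apply Rmult_le_compat_l. lra. apply rmax_sqrt_le; auto.
    + eapply Rle_trans.
      { apply global with (K := 4 * eta) (W := f0 + b); [lra|exact Hf|]. intros t Ht I.
        apply os_period; auto; lra. }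
      apply Rmult_le_compat_r; auto.
      unfold bound1. fold X. destruct (Rlt_dec f0 f1). lra.
      fold eta. apply Rnot_le_lt in Hnle. fold X in Hnle.
      pose proof (rmax_sqrt_ge f0 a b ha). fold eta in H.
      assert (0 <= eta) by apply sqrt_pos.
      assert (0 <= sqrt 2 * eta) by (apply Rmult_le_pos; auto).
      change (sqrt (Rmax (f0 / 2) b / a)) with eta.
      apply Rmin_glb.
      * assert ((4 + sqrt 2) * eta <= (4 + sqrt 2) * Rmax (sqrt (f0 / (2 * a))) (sqrt (b / a)))
          by (apply Rmult_le_compat_l; [lra|exact H]). nra.
      * nra.
Qed.
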